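(* Let $\mathcal{M}=\langle\mathbf{U},\mathbf{V},\mathcal{F},P(\mathbf{U})\rangle$ and $\mathcal{M}'=\langle\mathbf{U}',\mathbf{V},\mathcal{F}',P(\mathbf{U}')\rangle$ be two SCMs over the same endogenous variables $\mathbf{V}$ and with the same functional counterfactual set $\mathbf{F}$. Then $P^{\mathcal{M}}(\mathbf{F}=\mathbf{f})=P^{\mathcal{M}'}(\mathbf{F}=\mathbf{f})$ for all $\mathbf{f}\in\mathcal{D}_{\mathbf{F}}$ if and only if $\mathcal{L}_3(\mathcal{M})=\mathcal{L}_3(\mathcal{M}')$.
   Context: An SCM $\mathcal{M}=\langle \mathbf{U},\mathbf{V},\mathcal{F},P(\mathbf{U})\rangle$ has exogenous variables $\mathbf{U}$, endogenous variables $\mathbf{V}$, functions $f_V$ mapping exogenous parents $\mathbf{U}_V$ and endogenous parents $\mathbf{Pa}_V\subseteq\mathbf{V}\setminus\{V\}$ to $V$, and a distribution $P(\mathbf{U})$; SCMs are recursive with finite discrete endogenous domains; $\mathcal{D}_{\mathbf{X}}$ is the domain of $\mathbf{X}$. $\mathbf{Y}_{\mathbf{x}}(\mathbf{u})$ is the value of $\mathbf{Y}$ under $\mathbf{u}$ in the submodel with the functions of $\mathbf{X}$ replaced by constants $\mathbf{x}$; $P^{\mathcal{M}}(\mathbf{y}_{1[\mathbf{x}_1]},\mathbf{y}_{2[\mathbf{x}_2]},\dots)=\int\mathbf{1}[\mathbf{Y}_{1[\mathbf{x}_1]}(\mathbf{u})=\mathbf{y}_1,\mathbf{Y}_{2[\mathbf{x}_2]}(\mathbf{u})=\mathbf{y}_2,\dots]dP(\mathbf{u})$,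 and $\mathcal{L}_3(\mathcal{M})$ is the set of all such counterfactual distributions. The functional counterfactual set of $\mathcal{M}$ is $\mathbf{F}=\{V_{i[\mathbf{pa}^{(j)}_{V_i}]}:V_i\in\mathbf{V},\ \mathbf{pa}^{(j)}_{V_i}\in\mathcal{D}_{\mathbf{Pa}_{V_i}}\}$ (each variable intervened on every instantiation of its parents; if $\mathbf{Pa}_{V_i}=\emptyset$, $V_i$ itself is in $\mathbf{F}$), with instantiations $\mathbf{f}\in\mathcal{D}_{\mathbf{F}}$; $P^{\mathcal{M}}(\mathbf{F}=\mathbf{f})$ is the corresponding joint counterfactual probability. *)

(* Defs.v *)
From HB Require Import structures.
From mathcomp Require Import all_boot all_algebra.
From mathcomp Require Import all_classical all_reals.
From mathcomp Require Import ereal measure probability.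
Set Implicit Arguments. Unset Strict Implicit. Unset Printing Implicit Defensive.
Local Open Scope classical_set_scope.

Section SCM.
Variables (V : finType) (D : V -> finType).

Definition assign := forall w : V, D w.

(* A partial assignment: [x w = Some a] means variable [w] is set to [a];
   [None] means [w] is not in the intervened/observed set. Used both for
   interventions [X = x] and for observed outcomes [Y = y]. *)
Definition pinst := forall w : V, option (D w).

(* Recursiveness: the parent relation is acyclic (a rank function exists).
   In particular no variable is its own parent. *)
Definition recursive_graph (pa : V -> {set V}) :=
  exists rk : V -> nat, forall v w, w \in pa v -> (rk w < rk v)%N.

Definition mechanism (U : Type) := forall v : V, U -> assign -> D v.

Definition local_mech (pa : V -> {set V}) U (f : mechanism U) :=
  forall v u (s t : assign), (forall w, w \in pa v -> s w = t w) ->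
    f v u s = f v u t.

Definition measurable_mech d (U : measurableType d) (f : mechanism U) :=
  forall v (s : assign) (a : D v), measurable [set u | f v u s = a].

(* [s] is the (unique, by recursiveness) solution of the submodel M_x
   under exogenous state [u]. *)
Definition is_solution U (f : mechanism U) (x : pinst) (u : U) (s : assign) :=
  forall w, s w = match x w with Some a => a | None => f w u s end.

(* The event Y_x(u) = y, where Y is the support of [y]. *)
Definition cf_event U (f : mechanism U) (x y : pinst) : set U :=
  [set u | exists s, is_solution f x u s /\
     forall w a, y w = Some a -> s w = a].

Definition L3_event U (f : mechanism U) (q : seq (pinst * pinst)) : set U :=
  [set u | forall i, (i < size q)%N ->
     cf_event f (nth (fun _ => None, fun _ => None) q i).1
                (nth (fun _ => None, fun _ => None) q i).2 u].

Definition parent_inst (pa : V -> {set V}) (v : V) (x : pinst) :=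
  forall w, (w \in pa v) = isSome (x w).

(* Event F = fF for the functional counterfactual set
   F = { V_v[pa] : v in V, pa in D_{Pa_v} }; an instantiation fF gives a
   value fF v x in D v to each V_v[x]. *)
Definition F_event (pa : V -> {set V}) U (f : mechanism U)
    (fF : forall v : V, pinst -> D v) : set U :=
  [set u | forall v x, parent_inst pa v x ->
     exists s, is_solution f x u s /\ s v = fF v x].

End SCM.

(* Main.v *)
Require Import Defs.
From HB Require Import structures.
From mathcomp Require Import all_boot all_algebra.
From mathcomp Require Import all_classical all_reals.
From mathcomp Require Import ereal measure probability.
Set Implicit Arguments. Unset Strict Implicit. Unset Printing Implicit Defensive.
Local Open Scope classical_set_scope.

Section Helpers.
Variables (V : finType) (D : V -> finType) (pa : V -> {set V}).

Definition X := {dffun forall w : V, option (D w)}.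
Definition parentb v (xf : X) : bool := [forall w, (w \in pa v) == isSome (xf w)].

Lemma parentbP v (xf : X) : parentb v xf <-> parent_inst pa v (fun w => xf w).
Proof.
split; [move/forallP=> H w; exact/eqP/H | move=> H; apply/forallP=> w; apply/eqP; exact: H].
Qed.

Definition single v (a : D v) : pinst D :=
  fun w => match v =P w with ReflectT e => Some (eq_rect v D a w e) | ReflectF _ => None end.

Lemma single_spec (s : assign D) v (a : D v) :
  (forall w b, single a w = Some b -> s w = b) <-> s v = a.
Proof.
split.
- move=> H; apply: H; rewrite /single; case: (v =P v) => [e|//].
  by rewrite (eq_irrelevance e erefl).
- move=> Hs w b; rewrite /single; case: (v =P w) => // e; subst w => /= [[<-]] //.
Qed.

Lemma L3_nil U (f : mechanism D U) : L3_event f [::] = setT.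
Proof. by apply/seteqP; split => u //=. Qed.

Lemma L3_cons U (f : mechanism D U) p q u :
  L3_event f (p :: q) u <-> cf_event f p.1 p.2 u /\ L3_event f q u.
Proof.
split.
- move=> H; split; first exact: (H 0%N).
  by move=> i Hi; apply: (H i.+1).
- by move=> [H1 H2] [|i] Hi //=; apply: H2.
Qed.

Lemma L3_map U (f : mechanism D U) (A : eqType) (h : A -> pinst D * pinst D) s u :
  L3_event f (seq.map h s) u <-> forall a, a \in s -> cf_event f (h a).1 (h a).2 u.
Proof.
elim: s => [|a s IH] /=.
- by split => // _ i.
- rewrite L3_cons IH; split.
  + by move=> [H1 H2] b; rewrite in_cons => /orP [/eqP -> //| /H2].
  + move=> H; split; first by apply: H; rewrite mem_head.
    by move=> b Hb; apply: H; rewrite in_cons Hb orbT.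
Qed.

Definition PX := (V * X)%type.
Definition qF (fF : forall v : V, pinst D -> D v) : seq (pinst D * pinst D) :=
  seq.map (fun p : PX => @pair (pinst D) (pinst D) (fun w => p.2 w) (single (fF p.1 (fun w => p.2 w))))
      (seq.filter (fun p : PX => parentb p.1 p.2) (enum {: PX})).

Lemma F_L3 U (f : mechanism D U) fF : F_event pa f fF = L3_event f (qF fF).
Proof.
apply/seteqP; split => u /=.
- move=> H; apply/L3_map => p; rewrite mem_filter => /andP [Hp _] /=.
  have [s [Hs Hv]] := H p.1 _ (proj1 (parentbP _ _) Hp).
  by exists s; split => //; apply/single_spec.
- move/L3_map => H v x Hx.
  have Ex : (fun w => (finfun x : X) w) = x.
    by apply: boolp.functional_extensionality_dep => w; rewrite ffunE.
  have Hp : parentb v (finfun x) by apply/parentbP; rewrite Ex.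
  have := H (v, finfun x); rewrite mem_filter Hp mem_enum => /(_ isT) /=.
  rewrite Ex => -[s [Hs Hv]]; exists s; split => //; exact/single_spec.
Qed.

Section WithDefault.
Variable s0 : assign D.

Definition ext (x : pinst D) : assign D :=
  fun w => match x w with Some a => a | None => s0 w end.
Definition TT := {dffun forall v : V, {ffun X -> D v}}.
Definition rr U (f : mechanism D U) (u : U) : TT :=
  [ffun v => [ffun xf : X => if parentb v xf then f v u (ext (fun w => xf w)) else s0 v]].
Definition restrict (s : assign D) v : X :=
  [ffun w => if w \in pa v then Some (s w) else None].
Definition solT (t : TT) (x : pinst D) (s : assign D) :=
  forall w, s w = match x w with Some a => a | None => t w (restrict s w) end.

Lemma rr_restrict U (f : mechanism D U) (Hloc : local_mech pa f) u s w :
  rr f u w (restrict s w) = f w u s.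
Proof.
rewrite !ffunE.
have -> : parentb w (restrict s w).
  by apply/forallP => w'; rewrite ffunE; case: (w' \in pa w).
apply: Hloc => w' Hw'; by rewrite /ext ffunE Hw'.
Qed.

Lemma sol_equiv U (f : mechanism D U) (Hloc : local_mech pa f) x u s :
  is_solution f x u s <-> solT (rr f u) x s.
Proof.
split => H w; rewrite {1}H; case: (x w) => //; by rewrite rr_restrict.
Qed.

Definition d0 : pinst D * pinst D := (fun _ => None, fun _ => None).
Definition PhiT (q : seq (pinst D * pinst D)) (t : TT) :=
  forall i, (i < size q)%N -> exists s, solT t (nth d0 q i).1 s /\
     forall w a, (nth d0 q i).2 w = Some a -> s w = a.

Lemma L3_rr U (f : mechanism D U) (Hloc : local_mech pa f) q :
  L3_event f q = rr f @^-1` [set t | PhiT q t].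
Proof.
apply/seteqP; split => u /= H i Hi; have [s [Hs Hy]] := H i Hi; exists s; split => //.
- by apply/(sol_equiv Hloc).
- by apply/(sol_equiv Hloc).
Qed.

Fixpoint iter_sol U (f : mechanism D U) (x : pinst D) (u : U) (k : nat) : assign D :=
  match k with
  | 0 => s0
  | k'.+1 => fun w => match x w with Some a => a | None => f w u (iter_sol f x u k') end
  end.

Lemma exists_sol U (f : mechanism D U) (Hloc : local_mech pa f) (Hrec : recursive_graph pa) x u :
  exists s, is_solution f x u s.
Proof.
have [rk Hrk] := Hrec.
have stable : forall k w, (rk w < k)%N -> iter_sol f x u k w = iter_sol f x u k.+1 w.
  elim => [//|k IH] w Hw /=; case: (x w) => // .
  apply: Hloc => w' Hw'; apply: IH.
  exact: (leq_trans (Hrk _ _ Hw')).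
exists (iter_sol f x u (\max_w rk w).+1) => w.
rewrite stable /=; last by rewrite ltnS leq_bigmax.
by [].
Qed.

Lemma key U (f : mechanism D U) (Hloc : local_mech pa f) (Hrec : recursive_graph pa)
  v x u s : parent_inst pa v x -> is_solution f x u s -> s v = f v u (ext x).
Proof.
move=> Hx Hs.
have [rk Hrk] := Hrec.
have Hv : v \notin pa v by apply/negP => /Hrk; rewrite ltnn.
have : x v = None by move: (Hx v); rewrite (negbTE Hv); case: (x v).
move=> Hxv; rewrite Hs Hxv; apply: Hloc => w Hw.
rewrite /ext; move: (Hx w); rewrite Hw (Hs w).
by case: (x w).
Qed.

Definition canon (t : TT) := forall v xf, ~~ parentb v xf -> t v xf = s0 v.
Definition gF (t : TT) : forall v : V, pinst D -> D v := fun v x => t v (finfun x).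

Lemma canon_rr U (f : mechanism D U) u : canon (rr f u).
Proof. by move=> v xf Hp; rewrite !ffunE (negbTE Hp). Qed.

Lemma fiber_F U (f : mechanism D U) (Hloc : local_mech pa f) (Hrec : recursive_graph pa) t :
  canon t -> rr f @^-1` [set t] = F_event pa f (gF t).
Proof.
move=> Ht; apply/seteqP; split => u /=.
- move=> <- v x Hx.
  have [s Hs] := exists_sol Hloc Hrec x u.
  exists s; split => //.
  rewrite (key Hloc Hrec Hx Hs) /gF !ffunE.
  have Ex : (fun w => (finfun x : X) w) = x.
    by apply: boolp.functional_extensionality_dep => w; rewrite ffunE.
  have Hp : parentb v (finfun x) by apply/parentbP; rewrite Ex.
  by rewrite Hp Ex.
- move=> H; apply/ffunP => v; apply/ffunP => xf; rewrite !ffunE.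
  case: ifP => Hp; last by rewrite Ht // Hp.
  have [s [Hs Hv]] := H v _ (proj1 (parentbP _ _) Hp).
  by rewrite -(key Hloc Hrec (proj1 (parentbP _ _) Hp) Hs) Hv /gF ffunK.
Qed.

Lemma fiber_empty U (f : mechanism D U) t : ~ canon t -> rr f @^-1` [set t] = set0.
Proof.
move=> Ht; apply/seteqP; split => u //= Hu; apply: Ht; rewrite -Hu; exact: canon_rr.
Qed.


Lemma fin_bigcap_meas d (T : measurableType d) (I : finType) (F : I -> set T) :
  (forall i, measurable (F i)) -> measurable (\bigcap_(i in setT) F i).
Proof.
move=> HF.
have -> : \bigcap_(i in setT) F i = \bigcap_(i in [set` enum I]) F i.
  by congr bigcap; apply/seteqP; split => i //= _; rewrite mem_enum.
rewrite bigcap_seq; exact: bigsetI_measurable.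
Qed.

Lemma meas_fiber d (U : measurableType d) (f : mechanism D U) (Hmeas : measurable_mech f) t :
  measurable (rr f @^-1` [set t]).
Proof.
have -> : rr f @^-1` [set t] =
  \bigcap_(v in setT) \bigcap_(xf in setT) [set u | rr f u v xf = t v xf].
  apply/seteqP; split => u /=.
  - by move=> <- v _ xf _.
  - move=> H; apply/ffunP => v; apply/ffunP => xf; exact: H.
apply: fin_bigcap_meas => v; apply: fin_bigcap_meas => xf.
case Hp : (parentb v xf).
- have -> : [set u | rr f u v xf = t v xf] = [set u | f v u (ext (fun w => xf w)) = t v xf].
    by apply/seteqP; split => u /=; rewrite !ffunE Hp.
  exact: Hmeas.
- case: (eqVneq (s0 v) (t v xf)) => E.
  + have -> : [set u | rr f u v xf = t v xf] = setT.
      by apply/seteqP; split => u //= _; rewrite !ffunE Hp.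
    exact: measurableT.
  + have -> : [set u | rr f u v xf = t v xf] = set0.
      apply/seteqP; split => u //=; rewrite !ffunE Hp => E'.
      by rewrite E' eqxx in E.
    exact: measurable0.
Qed.

End WithDefault.
End Helpers.

Local Open Scope ereal_scope.

Theorem lemma2 (R : realType) (V : finType) (D : V -> finType)
  (pa : V -> {set V}) (Hrec : recursive_graph pa)
  (d1 : measure_display) (U1 : measurableType d1) (P1 : probability U1 R)
  (f1 : mechanism D U1)
  (Hloc1 : local_mech pa f1) (Hmeas1 : measurable_mech f1)
  (d2 : measure_display) (U2 : measurableType d2) (P2 : probability U2 R)
  (f2 : mechanism D U2)
  (Hloc2 : local_mech pa f2) (Hmeas2 : measurable_mech f2) :
  (forall fF : forall v : V, pinst D -> D v,
      P1 (F_event pa f1 fF) = P2 (F_event pa f2 fF)) <->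
  (forall q : seq (pinst D * pinst D),
      P1 (L3_event f1 q) = P2 (L3_event f2 q)).
Proof.
split; last first.
  by move=> H fF; rewrite !(F_L3 pa) H.
move=> H q.
case: (boolp.pselect (exists s : assign D, True)) => [[s0 _]|Hne]; last first.
  case: q => [|p q]; first by rewrite !L3_nil !probability_setT.
  have E : forall U (f : mechanism D U), L3_event f (p :: q) = set0.
    move=> U f; apply/seteqP; split => u //= Hu.
    have [s _] := Hu 0%N isT; apply: Hne; by exists s.
  by rewrite !E !measure0.
have Hsum : forall d (U : measurableType d) (P : probability U R) (f : mechanism D U),
    local_mech pa f -> measurable_mech f ->
    P (L3_event f q) = (\sum_(t \in [set t | PhiT pa q t]) P (rr pa s0 f @^-1` [set t]))%R.
  move=> d U P f Hl Hm.
  rewrite (L3_rr s0 Hl).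
  have -> : rr pa s0 f @^-1` [set t | PhiT pa q t] =
      \bigcup_(t in [set t | PhiT pa q t]) rr pa s0 f @^-1` [set t].
    apply/seteqP; split => u /=.
    - by move=> Hu; exists (rr pa s0 f u).
    - by move=> [t Ht /= ->].
  apply: measure_fin_bigcup.
  - exact: finite_finset.
  - by move=> i j _ _ [u /= [<- <-]].
  - by move=> t _; apply: meas_fiber.
rewrite (Hsum _ _ _ _ Hloc1 Hmeas1) (Hsum _ _ _ _ Hloc2 Hmeas2).
apply: eq_fsbigr => t _.
case: (boolp.pselect (canon pa s0 t)) => Ht.
- by rewrite !(fiber_F Hloc1 Hrec Ht) !(fiber_F Hloc2 Hrec Ht) H.
- by rewrite !fiber_empty // !measure0.
Qed.
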